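(* Let $R$ be a commutative ring which either has finitely many maximal ideals or whose set of minimal prime ideals $\operatorname{Min}(R)$ is quasi-compact in the Zariski topology. Then the following are equivalent: (i) $R$ is a GPP-ring; (ii) $R$ is a GPF-ring; (iii) $R$ is a quasi p.f. ring.
   Context: $R$ is a GPP-ring (resp. GPF-ring) if for each $f\in R$ there is $n\geq1$ with $Rf^n$ a projective (resp. flat) $R$-module. An ideal $I$ is quasi-pure if for each $f\in I$ there is $g\in I$ with $f(1-g)$ nilpotent; $R$ is a quasi p.f. ring if $\operatorname{Ann}(f)$ is quasi-pure for all $f\in R$. *)

(* Defs.v *)
From mathcomp Require Import all_boot all_order all_algebra.
Set Implicit Arguments. Unset Strict Implicit. Unset Printing Implicit Defensive.
Import GRing.Theory.
Local Open Scope ring_scope.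

Section Defs.
Variable R : comPzRingType.

Definition nilpotent (x : R) : Prop := exists k : nat, x ^+ k = 0.

Definition is_ideal (I : R -> Prop) : Prop :=
  [/\ I 0, (forall x y, I x -> I y -> I (x + y)) & (forall r x, I x -> I (r * x))].

Definition prime_ideal (P : R -> Prop) : Prop :=
  [/\ is_ideal P, ~ P 1 & (forall a b, P (a * b) -> P a \/ P b)].

Definition maximal_ideal (M : R -> Prop) : Prop :=
  [/\ is_ideal M, ~ M 1 &
      (forall J, is_ideal J -> (forall x, M x -> J x) -> (forall x, J x <-> M x) \/ J 1)].

Definition minimal_prime (P : R -> Prop) : Prop :=
  prime_ideal P /\
  (forall Q, prime_ideal Q -> (forall x, Q x -> P x) -> forall x, P x <-> Q x).

Definition finitely_many_maximal : Prop :=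
  exists (n : nat) (F : nat -> R -> Prop),
    forall M, maximal_ideal M -> exists k, (k < n)%N /\ forall x, M x <-> F k x.

(* Open subsets of Min(R) for the (subspace) Zariski topology:
   complements of the closed sets V(E) = {P | E ⊆ P}, intersected with Min(R). *)
Definition Min_open (U : (R -> Prop) -> Prop) : Prop :=
  exists E : R -> Prop, forall P, minimal_prime P ->
    (U P <-> exists a, E a /\ ~ P a).

Definition Min_quasi_compact : Prop :=
  forall (I : Type) (U : I -> (R -> Prop) -> Prop),
    (forall i, Min_open (U i)) ->
    (forall P, minimal_prime P -> exists i, U i P) ->
    exists (n : nat) (g : nat -> I),
      forall P, minimal_prime P -> exists k, (k < n)%N /\ U (g k) P.

Definition pideal (f : R) (n : nat) : R -> Prop := fun x => exists r, x = r * f ^+ n.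

Definition Ann (f : R) : R -> Prop := fun g => g * f = 0.

Definition quasi_pure (I : R -> Prop) : Prop :=
  forall f, I f -> exists g, I g /\ nilpotent (f * (1 - g)).

(* An R-linear map from the ideal I (as an R-module) to N, represented by a
   function R -> N whose values outside I are irrelevant. *)
Definition lin_on (I : R -> Prop) (N : lmodType R) (h : R -> N) : Prop :=
  forall a x y, I x -> I y -> h (a * x + y) = a *: h x + h y.

Definition projective_ideal (I : R -> Prop) : Prop :=
  forall (M N : lmodType R) (g : {linear M -> N}),
    (forall y, exists x, g x = y) ->
    forall h : R -> N, lin_on I h ->
      exists k : R -> M, lin_on I k /\ forall x, I x -> g (k x) = h x.

Definition bilin_on (I : R -> Prop) (N P : lmodType R) (b : N -> R -> P) : Prop :=
  (forall y, I y -> forall a (x1 x2 : N), b (a *: x1 + x2) y = a *: b x1 y + b x2 y)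
  /\ (forall x, lin_on I (b x)).

(* Flatness of the ideal I: for every injective linear u : N' -> N, the map
   u (x) 1 : N' (x) I -> N (x) I is injective.  An element sum_i x_i (x) m_i of
   a tensor product is zero iff it is killed by every bilinear map (universal
   property), which is how the tensor products are expressed here. *)
Definition flat_ideal (I : R -> Prop) : Prop :=
  forall (N' N : lmodType R) (u : {linear N' -> N}), injective u ->
  forall (n : nat) (x : 'I_n -> N') (m : 'I_n -> R), (forall i, I (m i)) ->
    (forall (P : lmodType R) (b : N -> R -> P), bilin_on I b ->
        \sum_(i < n) b (u (x i)) (m i) = 0) ->
    (forall (P : lmodType R) (b : N' -> R -> P), bilin_on I b ->
        \sum_(i < n) b (x i) (m i) = 0).

Definition GPP_ring : Prop :=
  forall f : R, exists n : nat, (1 <= n)%N /\ projective_ideal (pideal f n).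

Definition GPF_ring : Prop :=
  forall f : R, exists n : nat, (1 <= n)%N /\ flat_ideal (pideal f n).

Definition quasi_pf_ring : Prop := forall f : R, quasi_pure (Ann f).

End Defs.

(* Main.v *)
From HB Require Import structures.
Require Import Defs.
From mathcomp Require Import all_boot all_order all_algebra.
From mathcomp Require Import boolp classical_sets.
From Stdlib Require ClassicalEpsilon.
From mathcomp Require Import ring.
Set Implicit Arguments. Unset Strict Implicit. Unset Printing Implicit Defensive.
Import GRing.Theory.
Local Open Scope ring_scope.
Local Open Scope quotient_scope.

Record Ideal (R : comPzRingType) := MkIdeal { icar : R -> Prop; iidP : is_ideal icar }.

Section QuotMod.
Variable R : comPzRingType.
Variable I : Ideal R.
Local Notation J := (icar I).
Local Notation HJ := (iidP I).

Definition Jb : {pred R} := fun x => `[< J x >].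

Lemma Jb_zmod : zmod_closed Jb.
Proof.
case: HJ => J0 JD JM; split; first by apply/asboolP.
move=> u v /asboolP Ju /asboolP Jv; apply/asboolP.
have := JM (-1) _ Jv; rewrite mulN1r => Jnv; exact: JD.
Qed.

HB.instance Definition _ := GRing.isZmodClosed.Build R Jb Jb_zmod.

Local Notation QJ := (Quotient.quot Jb).

Lemma piQ_eq x y : \pi_QJ x = \pi_QJ y <-> J (x - y).
Proof.
split=> [/eqP|]; first by rewrite -Quotient.idealrBE => /asboolP.
by move=> H; apply/eqP; rewrite -Quotient.idealrBE; apply/asboolP.
Qed.

Lemma piD x y : \pi_QJ (x + y) = \pi_QJ x + \pi_QJ y.
Proof. exact: Quotient.pi_add. Qed.

Lemma QJ_onto (v : QJ) : exists x, v = \pi_QJ x.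
Proof. by exists (repr v); rewrite (@reprK _ QJ). Qed.

Definition qscale (a : R) (q : QJ) : QJ := \pi_QJ (a * repr q).

Lemma qscale_pi a x : qscale a (\pi_QJ x) = \pi_QJ (a * x).
Proof.
rewrite /qscale; apply/piQ_eq; rewrite -mulrBr.
case: HJ => _ _ JM; apply: JM; apply piQ_eq; by rewrite reprK.
Qed.

Lemma qscaleA a b v : qscale a (qscale b v) = qscale (a * b) v.
Proof. by have [x ->] := QJ_onto v; rewrite !qscale_pi mulrA. Qed.
Lemma qscale1 : left_id 1 qscale.
Proof. by move=> v; have [x ->] := QJ_onto v; rewrite qscale_pi mul1r. Qed.
Lemma qscaleDr : right_distributive qscale +%R.
Proof.
move=> a u v; have [x ->] := QJ_onto u; have [y ->] := QJ_onto v.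
rewrite -piD !qscale_pi.
by rewrite mulrDr piD.
Qed.
Lemma qscaleDl v : {morph qscale^~ v: a b / a + b}.
Proof. by move=> a b; have [x ->] := QJ_onto v; rewrite !qscale_pi mulrDl piD. Qed.

HB.instance Definition _ := GRing.Zmodule_isLmodule.Build R QJ qscaleA qscale1 qscaleDr qscaleDl.

Definition piQ (x : R^o) : QJ := \pi_QJ x.

Lemma piQ_lin : linear piQ.
Proof.
move=> a x y; rewrite /piQ piD; congr (_ + _); exact: (esym (qscale_pi a x)).
Qed.

HB.instance Definition _ := GRing.isLinear.Build R R^o QJ *:%R piQ piQ_lin.

Lemma piQ_surj (q : QJ) : exists x, piQ x = q.
Proof. by have [x ->] := QJ_onto q; exists x. Qed.

Lemma piQ_eq0 x : piQ x = 0 <-> J x.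
Proof. by rewrite -(raddf0 piQ) /piQ piQ_eq subr0. Qed.
End QuotMod.

Definition QT (R : comPzRingType) (I : Ideal R) := Quotient.quot (Jb I).

Section ModLemmas.
Variable R : comPzRingType.
Implicit Types (f a r : R).

Lemma scaleRoE a (x : R^o) : a *: x = a * x. Proof. by []. Qed.

Definition rep f n x : R := ClassicalEpsilon.epsilon (inhabits 0) (fun r => x = r * f ^+ n).

Lemma repP f n x : pideal f n x -> x = rep f n x * f ^+ n.
Proof. move=> H; exact: (ClassicalEpsilon.epsilon_spec (inhabits 0) _ H). Qed.

Lemma pideal_fn f n : pideal f n (f ^+ n).
Proof. by exists 1; rewrite mul1r. Qed.

Lemma pideal0 f n : pideal f n 0.
Proof. by exists 0; rewrite mul0r. Qed.

Lemma pidealP f n a x y : pideal f n x -> pideal f n y -> pideal f n (a * x + y).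
Proof. by move=> [r ->] [s ->]; exists (a * r + s); rewrite mulrDl mulrA. Qed.

Lemma rep_lin f n a x y : pideal f n x -> pideal f n y ->
  (rep f n (a * x + y) - (a * rep f n x + rep f n y)) * f ^+ n = 0.
Proof.
move=> Ix Iy; rewrite mulrBl -(repP (pidealP a Ix Iy)) mulrDl -mulrA.
by rewrite -(repP Ix) -(repP Iy) subrr.
Qed.

Definition split_ f n := exists e, e * f ^+ n = f ^+ n /\ forall r, r * f ^+ n = 0 -> r * e = 0.

Lemma double0 (V : zmodType) (v : V) : v = v + v -> v = 0.
Proof. by move=> H; have := addrK v v; rewrite -H subrr => ->. Qed.

Lemma lin_on0 (I : R -> Prop) (N : lmodType R) (h : R -> N) : I 0 -> lin_on I h -> h 0 = 0.
Proof. by move=> I0 hl; apply: double0; have := hl 1 0 0 I0 I0; rewrite mulr0 addr0 scale1r. Qed.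

Lemma lin_onZ (I : R -> Prop) (N : lmodType R) (h : R -> N) a x : I 0 -> I x -> lin_on I h ->
  h (a * x) = a *: h x.
Proof. by move=> I0 Ix hl; have := hl a x 0 Ix I0; rewrite addr0 (lin_on0 I0 hl) addr0. Qed.

Lemma split_proj f n : split_ f n -> projective_ideal (pideal f n).
Proof.
move=> [e [ef Ae]] M N g gsurj h hlin.
have [m0 gm0] := gsurj (h (f ^+ n)).
exists (fun x => (rep f n x * e) *: m0); split.
- move=> a x y Ix Iy /=; rewrite scalerA -scalerDl; congr (_ *: _).
  have /Ae := rep_lin a Ix Iy; rewrite mulrBl => /eqP; rewrite subr_eq0 => /eqP ->.
  by rewrite mulrDl mulrA.
- move=> x Ix; rewrite linearZ gm0 /=.
  have I0 := pideal0 f n.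
  have -> : h x = rep f n x *: h (f ^+ n).
    by rewrite {1}(repP Ix) (lin_onZ _ I0 (pideal_fn f n) hlin).
  have he : (e - 1) *: h (f ^+ n) = 0.
    rewrite -(lin_onZ _ I0 (pideal_fn f n) hlin) mulrBl ef mul1r subrr.
    exact: lin_on0 I0 hlin.
  by rewrite -scalerA -[e](subrK 1) scalerDl he add0r scale1r.
Qed.

Lemma split_flat f n : split_ f n -> flat_ideal (pideal f n).
Proof.
move=> [e [ef Ae]] N' N u uinj k x m Im Hb P b' [b1 b2].
have I0 := pideal0 f n; have Ifn := pideal_fn f n.
pose c i := rep f n (m i) * e.
have Hc : \sum_(i < k) c i *: x i = 0.
  apply: uinj; rewrite linear0 linear_sum.
  have := Hb N (fun (y : N) (r : R) => ((rep f n r * e) *: y : N)).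
  move=> H; under eq_bigr do rewrite linearZ; apply: H; split.
  - move=> y Iy a x1 x2 /=; by rewrite scalerDr !scalerA mulrC.
  - move=> y a r1 r2 I1 I2 /=; rewrite scalerA -scalerDl; congr (_ *: _).
    have /Ae := rep_lin a I1 I2; rewrite mulrBl => /eqP; rewrite subr_eq0 => /eqP ->.
    by rewrite mulrDl mulrA.
have b0 : forall y, pideal f n y -> b' 0 y = 0.
  move=> y Iy; apply: double0; have H := b1 y Iy 1 0 0; rewrite !scale1r addr0 in H; exact: H.
have bD : forall x1 x2, b' (x1 + x2) (f ^+ n) = b' x1 (f ^+ n) + b' x2 (f ^+ n).
  by move=> x1 x2; have H := b1 _ Ifn 1 x1 x2; rewrite !scale1r in H; exact: H.
have -> : \sum_(i < k) b' (x i) (m i) = \sum_(i < k) b' (c i *: x i) (f ^+ n).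
  apply: eq_bigr => i _.
  have -> : m i = c i * f ^+ n by rewrite /c -mulrA ef -repP.
  rewrite (lin_onZ _ I0 Ifn (b2 (x i))).
  have H := b1 _ Ifn (c i) (x i) 0; rewrite addr0 (b0 _ Ifn) addr0 in H; by rewrite H.
transitivity (b' (\sum_(i < k) c i *: x i) (f ^+ n)); last by rewrite Hc b0.
by symmetry; apply: (big_morph (fun z => b' z (f ^+ n)) bD (b0 _ Ifn)).
Qed.

Definition annP (c : R) : R -> Prop := fun x => x * c = 0.
Lemma annP_ideal c : is_ideal (annP c).
Proof.
split; rewrite /annP; first by rewrite mul0r.
- by move=> x y Hx Hy; rewrite mulrDl Hx Hy addr0.
- by move=> r x Hx; rewrite -mulrA Hx mulr0.
Qed.
Definition AnnI c : Ideal R := MkIdeal (annP_ideal c).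

Definition kP (a c : R) : R -> Prop := fun x => exists t, t * c = 0 /\ x = a * t.
Lemma kP_ideal a c : is_ideal (kP a c).
Proof.
split; rewrite /kP; first by exists 0; rewrite mul0r mulr0.
- by move=> x y [t [Ht ->]] [s [Hs ->]]; exists (t + s); rewrite mulrDl Ht Hs addr0 mulrDr.
- move=> r x [t [Ht ->]]; exists (r * t); split; first by rewrite -mulrA Ht mulr0.
  by rewrite mulrCA.
Qed.
Definition KI a c : Ideal R := MkIdeal (kP_ideal a c).

Lemma proj_split f n : projective_ideal (pideal f n) -> split_ f n.
Proof.
move=> Hp; pose I := AnnI (f ^+ n).
have I0 := pideal0 f n; have Ifn := pideal_fn f n.
have := Hp R^o (QT I) (piQ I) (@piQ_surj _ I) (fun x => piQ I (rep f n x)).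
case.
  move=> a x y Ix Iy /=; rewrite -linearP; apply/piQ_eq => /=.
  exact: rep_lin.
move=> k [klin hk]; exists (k (f ^+ n)); split.
- have := hk _ Ifn; rewrite /= /piQ => /piQ_eq; rewrite /= /annP mulrBl => /eqP.
  by rewrite subr_eq0 -(repP Ifn) => /eqP.
- move=> r Hr; have := klin r _ _ Ifn I0; rewrite Hr addr0 (lin_on0 I0 klin) addr0.
  by move=> /esym.
Qed.
End ModLemmas.

Section UA.
Variable R : comPzRingType.
Variable a : R.
Local Notation Q := (QT (AnnI a)).

Definition uA (q : Q) : R^o := repr q * a.

Lemma uA_pi x : uA (\pi_Q x) = x * a.
Proof.
rewrite /uA; apply/eqP; rewrite -subr_eq0 -mulrBl; apply/eqP.
apply: (proj1 (piQ_eq (AnnI a) _ _)); exact: (@reprK _ Q).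
Qed.

Lemma uA_lin : linear uA.
Proof.
move=> c q1 q2.
have [x1 ->] := QJ_onto q1; have [x2 ->] := QJ_onto q2.
rewrite -[\pi_Q x1]/(piQ _ x1) -[\pi_Q x2]/(piQ _ x2) -linearP /piQ uA_pi uA_pi uA_pi.
by rewrite scaleRoE mulrDl scaleRoE mulrA.
Qed.

HB.instance Definition _ := GRing.isLinear.Build R Q R^o *:%R uA uA_lin.

Lemma uA_P c q1 q2 : uA (c *: q1 + q2) = c * uA q1 + uA q2.
Proof. exact: uA_lin. Qed.

Lemma uA_inj : injective uA.
Proof.
move=> q1 q2; have [x1 ->] := QJ_onto q1; have [x2 ->] := QJ_onto q2.
rewrite !uA_pi => H; apply/piQ_eq; rewrite /= /annP mulrBl H subrr //.
Qed.
End UA.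

Section Flat.
Variable R : comPzRingType.
Implicit Types (f a r : R).


Lemma flat_pure f n a : flat_ideal (pideal f n) -> a * f ^+ n = 0 ->
  exists t, t * f ^+ n = 0 /\ a = a * t.
Proof.
move=> Hf Ha.
have I0 := pideal0 f n; have Ifn := pideal_fn f n.
pose K := KI a (f ^+ n).
have H := Hf _ _ (@uA _ a) (@uA_inj _ a) 1 (fun _ => piQ (AnnI a) 1) (fun _ => f ^+ n) (fun _ => Ifn).
have H2 : forall (P : lmodType R) (b : R^o -> R -> P), bilin_on (pideal f n) b ->
   \sum_(i < 1) b (@uA _ a (piQ (AnnI a) 1)) (f ^+ n) = 0.
  move=> P b [b1 b2]; rewrite big_ord1 /piQ uA_pi mul1r.
  have b0 : b 0 (f ^+ n) = 0.
    apply: double0; have H0 := b1 _ Ifn 1 0 0; rewrite !scale1r addr0 in H0; exact: H0.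
  have H1 := b1 _ Ifn a 1 0; rewrite scaleRoE mulr1 addr0 b0 addr0 in H1.
  rewrite H1 -(lin_onZ _ I0 Ifn (b2 1)) Ha; exact: (lin_on0 I0 (b2 1)).
have {H H2}H := H H2.
have Bb : bilin_on (pideal f n) (fun q y => piQ K (@uA _ a q * rep f n y)).
  split.
  - move=> y Iy c q1 q2 /=; rewrite uA_P mulrDl -mulrA.
    exact: (linearP (piQ K) c _ _).
  - move=> q c y1 y2 I1 I2 /=.
    rewrite -[c *: piQ K _ + _]linearP; apply/piQ_eq => /=.
    exists (repr q * (rep f n (c * y1 + y2) - (c * rep f n y1 + rep f n y2))); split.
      by rewrite -mulrA rep_lin // mulr0.
    rewrite /uA scaleRoE; ring.
have := H _ _ Bb; rewrite big_ord1 /= /piQ uA_pi mul1r.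
move=> /(proj1 (piQ_eq0 K _)) [t [Ht Hat]].
exists (t - rep f n (f ^+ n) + 1); split.
  by rewrite !mulrDl mulNr -(repP Ifn) Ht mul1r sub0r addNr.
by rewrite !mulrDr mulrN -Hat subrr add0r mulr1.
Qed.

Lemma GPF_QPF : GPF_ring R -> quasi_pf_ring R.
Proof.
move=> HG f g Hg; have [n [n1 Hn]] := HG g.
rewrite /Ann in Hg.
have Hfg : f * g ^+ n = 0 by rewrite -(subnKC n1) exprS mulrA [f * g]mulrC Hg mul0r.
have [t [Ht Hft]] := flat_pure Hn Hfg.
exists (1 - t); split.
  by rewrite /Ann mulrBl mul1r [t * f]mulrC -Hft subrr.
exists n; rewrite opprB addrC subrK exprMn mulrC.
have -> : t ^+ n = t ^+ n.-1 * t by rewrite -exprSr prednK.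
by rewrite -mulrA Ht mulr0.
Qed.

Lemma GPP_GPF : GPP_ring R -> GPF_ring R.
Proof.
move=> HG f; have [n [n1 Hn]] := HG f; exists n; split => //.
exact/split_flat/proj_split.
Qed.
End Flat.

Local Open Scope classical_set_scope.
Local Open Scope ring_scope.

Lemma zorn_sets T (Phi : set T -> Prop) (X0 : set T) :
  Phi X0 ->
  (forall F : set (set T), (forall X, F X -> Phi X /\ X0 `<=` X) ->
     total_on F subset -> (exists X, F X) -> Phi (\bigcup_(X in F) X)) ->
  exists A, [/\ Phi A, X0 `<=` A & forall B, A `<=` B -> Phi B -> B `<=` A].
Proof.
move=> P0 Hch.
have [|A [PA Amax]] := @Zorn_bigcup T (fun X => Phi (X `|` X0)).
  move=> F FP Ftot.
  have [[X FX]|F0] := pselect (exists X, F X); last first.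
    have -> : \bigcup_(X in F) X `|` X0 = X0.
      apply/seteqP; split => [x [[Y FY _]|//]|x ?]; last by right.
      by case: F0; exists Y.
    exact: P0.
  pose G := [set Y `|` X0 | Y in F].
  have -> : \bigcup_(Y in F) Y `|` X0 = \bigcup_(Y in G) Y.
    apply/seteqP; split => x.
    - case => [[Y FY Yx]|X0x].
        by exists (Y `|` X0); [exists Y | left].
      by exists (X `|` X0); [exists X | right].
    - move=> [_ [Y FY <-]] [Yx|X0x]; [by left; exists Y | by right].
  apply: Hch.
  - move=> _ [Y FY <-]; split; [exact: FP | exact: subsetUr].
  - move=> _ _ [Y1 F1 <-] [Y2 F2 <-].
    by case: (Ftot _ _ F1 F2) => H; [left|right]; apply: setSU.
  - by exists (X `|` X0); exists X.
have X0A : X0 `<=` A.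
  move=> x X0x; apply: contrapT => nAx.
  apply: (Amax (A `|` X0)); last by rewrite -setUA setUid.
  split; first exact: subsetUl.
  move=> H; exact: nAx (H x (or_intror X0x)).
exists A; split.
- by move: PA; rewrite setUidl.
- exact X0A.
- move=> B AB PB x Bx; apply: contrapT => nAx.
  apply: (Amax B); first by split=> // H; exact: nAx (H x Bx).
  by rewrite setUidl //; apply: subset_trans X0A AB.
Qed.

Section Primes.
Variable R : comPzRingType.
Implicit Types (P Q I J : R -> Prop) (a b x y r s : R).

Lemma Iid0 I : is_ideal I -> I 0. Proof. by case. Qed.
Lemma IidD I x y : is_ideal I -> I x -> I y -> I (x + y). Proof. by case=> _ H _; apply: H. Qed.
Lemma IidM I r x : is_ideal I -> I x -> I (r * x). Proof. by case=> _ _ H; apply: H. Qed.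
Lemma IidMr I r x : is_ideal I -> I x -> I (x * r). Proof. by move=> ? ?; rewrite mulrC; apply: IidM. Qed.
Lemma IidN I x : is_ideal I -> I x -> I (- x).
Proof. by move=> HI Ix; rewrite -mulN1r; apply: IidM. Qed.
Lemma IidB I x y : is_ideal I -> I x -> I y -> I (x - y).
Proof. by move=> HI Ix Iy; apply: IidD => //; apply: IidN. Qed.

Lemma prime_ideal_ideal P : prime_ideal P -> is_ideal P. Proof. by case. Qed.
Lemma prime1 P : prime_ideal P -> ~ P 1. Proof. by case. Qed.
Lemma primeM P a b : prime_ideal P -> P (a * b) -> P a \/ P b.
Proof. by case=> _ _ H; apply: H. Qed.

Lemma prime_pow P x k : prime_ideal P -> P (x ^+ k) -> P x.
Proof.
move=> HP; elim: k => [|k IH]; first by rewrite expr0 => /(prime1 HP).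
by rewrite exprS => /(primeM HP) [].
Qed.

Lemma prime_nil P x : prime_ideal P -> nilpotent x -> P x.
Proof. by move=> HP [k Hk]; apply: (@prime_pow _ _ k HP); rewrite Hk; apply: Iid0; apply: prime_ideal_ideal. Qed.

Lemma prime_ext P P' : (forall x, P x <-> P' x) -> prime_ideal P -> prime_ideal P'.
Proof.
move=> E [[P0 PD PM] P1 PP]; split; first split.
- by apply/E.
- by move=> x y /E Hx /E Hy; apply/E; apply: PD.
- by move=> r x /E Hx; apply/E; apply: PM.
- by move/E.
- by move=> a b /E /PP [] Ha; [left|right]; apply/E.
Qed.

Lemma chain_ideal (F : set (set R)) :
  (forall X, F X -> is_ideal X) -> total_on F subset -> (exists X, F X) ->
  is_ideal (\bigcup_(X in F) X).
Proof.
move=> FI Ftot [X0 FX0]; split.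
- by exists X0 => //; apply: Iid0; apply: FI.
- move=> x y [X1 F1 Hx] [X2 F2 Hy].
  case: (Ftot _ _ F1 F2) => S.
    by exists X2 => //; apply: IidD => //; [apply: FI | apply: S].
  by exists X1 => //; apply: IidD => //; [apply: FI | apply: S].
- by move=> r x [X1 F1 Hx]; exists X1 => //; apply: IidM => //; apply: FI.
Qed.

Lemma max_avoid (S I : R -> Prop) :
  S 1 -> (forall a b, S a -> S b -> S (a * b)) -> is_ideal I ->
  (forall x, I x -> ~ S x) ->
  exists P, [/\ prime_ideal P, (forall x, I x -> P x), (forall x, P x -> ~ S x) &
    (forall J, is_ideal J -> (forall x, P x -> J x) -> (forall x, J x -> ~ S x) ->
       forall x, J x -> P x)].
Proof.
move=> S1 SM HI IS.
pose Phi := fun X : set R => is_ideal X /\ forall x, X x -> ~ S x.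
have Hch : forall F : set (set R), (forall X, F X -> Phi X /\ I `<=` X) ->
     total_on F subset -> (exists X, F X) -> Phi (\bigcup_(X in F) X).
  move=> F FP Ftot Fne; split.
    by apply: chain_ideal => // X /FP [[]].
  by move=> x [X /FP [[_ XS] _] Xx]; apply: XS.
have [P [[HP PS] IP Pmax]] := @zorn_sets R Phi I (conj HI IS) Hch.
exists P; split => //.
- split => //; first by move=> P1; apply: (PS 1).
  move=> a b Pab; apply: contrapT => /not_orP [nPa nPb].
  pose Ja c := fun x => exists p r, P p /\ x = p + r * c.
  have Jid c : is_ideal (Ja c).
    split.
    + by exists 0, 0; rewrite mul0r addr0; split => //; apply: Iid0.
    + move=> x y [p [r [Pp ->]]] [q [t [Pq ->]]]; exists (p + q), (r + t); split.
        exact: IidD.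
      by rewrite mulrDl addrACA.
    + move=> t x [p [r [Pp ->]]]; exists (t * p), (t * r); split; first exact: IidM.
      by rewrite mulrDr mulrA.
  have JP c : Ja c `<=` P -> P c.
    by move=> H; apply: H; exists 0, 1; rewrite mul1r add0r; split => //; apply: Iid0.
  have meet c : ~ P c -> exists s, Ja c s /\ S s.
    move=> nPc; apply: contrapT => H; apply: nPc; apply: JP.
    apply: (Pmax (Ja c)).
      by move=> x Px; exists x, 0; rewrite mul0r addr0.
    split => // x Jx Sx; apply: H; by exists x.
  have [s1 [[p1 [r1 [Pp1 E1]]] S1']] := meet a nPa.
  have [s2 [[p2 [r2 [Pp2 E2]]] S2']] := meet b nPb.
  apply: (PS (s1 * s2)); last exact: SM.
  have -> : s1 * s2 = p1 * s2 + (a * r1 * p2 + r1 * r2 * (a * b)).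
    by rewrite E1 E2; ring.
  apply: IidD => //; first exact: IidMr.
  by apply: IidD => //; apply: IidM.
- move=> J HJ PJ JS; exact: (Pmax J PJ (conj HJ JS)).
Qed.

End Primes.

Section Primes2.
Variable R : comPzRingType.
Implicit Types (P Q I J : R -> Prop) (a b x y r s : R).

Lemma min_prime_below Q : prime_ideal Q -> exists P, minimal_prime P /\ forall x, P x -> Q x.
Proof.
move=> HQ.
pose Phi := fun X : set R => prime_ideal (fun x => ~ X x).
have P0 : Phi (fun x => ~ Q x).
  by apply: prime_ext HQ => x; split => [H /(_ H)|/contrapT].
have Hch : forall F : set (set R), (forall X, F X -> Phi X /\ (fun x => ~ Q x) `<=` X) ->
     total_on F subset -> (exists X, F X) -> Phi (\bigcup_(X in F) X).
  move=> F FP Ftot [X0 FX0]; split; first split.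
  - move=> [X FX X0']; have [[[H _ _] _ _] _] := FP X FX; exact: H X0'.
  - move=> x y Hx Hy [X FX Xxy]; have [[[_ H _] _ _] _] := FP X FX.
    by apply: (H x y) Xxy => ?; [apply: Hx | apply: Hy]; exists X.
  - move=> r x Hx [X FX Xrx]; have [[[_ _ H] _ _] _] := FP X FX.
    by apply: (H r x) Xrx => ?; apply: Hx; exists X.
  - have [[_ H _] _] := FP X0 FX0; apply; exists X0 => //; exact: contrapT.
  - move=> a b Hab; apply: contrapT => /not_orP [/contrapT [X1 F1 Xa] /contrapT [X2 F2 Xb]].
    case: (Ftot _ _ F1 F2) => S.
    + have [[_ _ H] _] := FP X2 F2.
      have : ~ X2 (a * b) by move=> ?; apply: Hab; exists X2.
      by move/H => [] []; [apply: S|].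
    + have [[_ _ H] _] := FP X1 F1.
      have : ~ X1 (a * b) by move=> ?; apply: Hab; exists X1.
      by move/H => [] []; [|apply: S].
have [A [PA QA Amax]] := @zorn_sets R Phi _ P0 Hch.
exists (fun x => ~ A x); split; last first.
  by move=> x nAx; apply: contrapT => nQx; apply: nAx; apply: QA.
split => // Q' HQ' sub x; split => [nAx|Q'x]; last by apply: sub.
apply: contrapT => nQ'x; apply: nAx.
have := Amax (fun x => ~ Q' x).
apply => //.
  by move=> y Ay Q'y; apply: (sub y Q'y).
by apply: prime_ext HQ' => y; split => [H /(_ H)|/contrapT].
Qed.

Lemma nil_of_min x : (forall P, minimal_prime P -> P x) -> nilpotent x.
Proof.
move=> H; apply: contrapT => nx.
have [||||P [HP IP PS _]] := @max_avoid R (fun y => exists k, y = x ^+ k) (fun y => y = 0).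
- by exists 0%N; rewrite expr0.
- by move=> a b [k ->] [l ->]; exists (k + l)%N; rewrite exprD.
- split => //; first by move=> ? ? -> ->; rewrite addr0.
  by move=> r ? ->; rewrite mulr0.
- by move=> y -> [k Hk]; apply: nx; exists k.
have [Q [mQ QP]] := min_prime_below HP.
by apply: (PS x); [apply: QP; apply: H | exists 1%N; rewrite expr1].
Qed.

Lemma min_prime_nil P x : minimal_prime P -> P x -> exists s, ~ P s /\ nilpotent (s * x).
Proof.
move=> [HP Pmin] Px; apply: contrapT => H.
have H' : forall s, ~ P s -> ~ nilpotent (s * x).
  by move=> s nPs nil; apply: H; exists s.
have [||||Q [HQ IQ QS _]] := @max_avoid R (fun y => exists s k, ~ P s /\ y = s * x ^+ k) (fun y => y = 0).
- by exists 1, 0%N; rewrite expr0 mulr1; split => //; apply: prime1.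
- move=> a b [s [k [nPs ->]]] [t [l [nPt ->]]]; exists (s * t), (k + l)%N; split.
    by move/(primeM HP) => [].
  by rewrite exprD; ring.
- split => //; first by move=> ? ? -> ->; rewrite addr0.
  by move=> r ? ->; rewrite mulr0.
- move=> y -> [s [k [nPs E]]]; apply: (H' s nPs); exists k.+1.
  have -> : (s * x) ^+ k.+1 = s ^+ k * x * (s * x ^+ k) by rewrite exprMn !exprS; ring.
  by rewrite -E mulr0.
have QsubP : forall y, Q y -> P y.
  move=> y Qy; apply: contrapT => nPy; apply: (QS y Qy); exists y, 0%N.
  by rewrite expr0 mulr1.
have [PQ _] := Pmin Q HQ QsubP x; have Qx := PQ Px.
by apply: (QS x Qx); exists 1, 1%N; rewrite expr1 mul1r; split => //; apply: prime1.
Qed.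

Lemma max_exists I : is_ideal I -> ~ I 1 -> exists M, maximal_ideal M /\ forall x, I x -> M x.
Proof.
move=> HI nI1.
have [||||M [HM IM MS Mmax]] := @max_avoid R (fun y => y = 1) I.
- by [].
- by move=> a b -> ->; rewrite mulr1.
- exact: HI.
- by move=> x Ix E; apply: nI1; rewrite -E.
exists M; split => //; split.
- exact: prime_ideal_ideal.
- by move=> M1; apply: (MS 1).
- move=> J HJ MJ; have [J1|nJ1] := pselect (J 1); [by right | left].
  move=> x; split; last exact: MJ.
  apply: Mmax => // y Jy E; apply: nJ1; rewrite -E //.
Qed.

End Primes2.

Section Main.
Variable R : comPzRingType.
Implicit Types (P Q I J : R -> Prop) (a b x y r s f : R).

Definition cover_compact :=
  forall (U : option (nat * R * R) -> (R -> Prop) -> Prop),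
    (forall i, Min_open (U i)) ->
    (forall P, minimal_prime P -> exists i, U i P) ->
    exists (N : nat) (g : nat -> option (nat * R * R)),
      forall P, minimal_prime P -> exists k, (k < N)%N /\ U (g k) P.

Lemma comax_mul a b c : (exists p q, a * p + b * q = 1) -> (exists p q, a * p + c * q = 1) ->
  exists p q, a * p + (b * c) * q = 1.
Proof.
move=> [p [q E1]] [p' [q' E2]].
exists (p * a * p' + p * c * q' + b * q * p'), (q * q').
by rewrite -[1](mulr1 1) -{1}E1 -E2; ring.
Qed.

Lemma comax_pow a b k : (exists p q, a * p + b * q = 1) -> exists p q, a * p + b ^+ k * q = 1.
Proof.
move=> H; elim: k => [|k IH]; first by exists (0 : R), (1 : R); rewrite expr0 mulr0 mul1r add0r.
by rewrite exprS; apply: comax_mul.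
Qed.

Lemma comax_sym a b : (exists p q, a * p + b * q = 1) -> exists p q, b * p + a * q = 1.
Proof. by move=> [p [q E]]; exists q, p; rewrite addrC. Qed.

Lemma nil_kill (w t : R) : nilpotent w -> w * t = t -> t = 0.
Proof.
move=> [k Hk] E; have : forall j, w ^+ j * t = t.
  by elim=> [|j IH]; [rewrite expr0 mul1r | rewrite exprSr -mulrA E].
by move/(_ k); rewrite Hk mul0r.
Qed.


Lemma main_split : quasi_pf_ring R -> cover_compact ->
  forall f, exists n, (1 <= n)%N /\ split_ f n.
Proof.
move=> HQ HC f.
pose valid k g h := h * f ^+ k = 0 /\ nilpotent (g * (1 - h)).
pose U (i : option (nat * R * R)) (P : R -> Prop) :=
  if i is Some (k, g, h) then valid k g h /\ ~ P g else ~ P f.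
have Uopen : forall i, Min_open (U i).
  case=> [[[k g] h]|].
  - exists (fun a => a = g /\ valid k g h) => P _ /=; split.
      by move=> [V nPg]; exists g.
    by move=> [a [[-> V] nPa]].
  - exists (fun a => a = f) => P _ /=; split; first by move=> nPf; exists f.
    by move=> [a [-> ]].
have Ucov : forall P, minimal_prime P -> exists i, U i P.
  move=> P mP; have [Pf|nPf] := pselect (P f); last by exists None.
  have [s [nPs [k Hk]]] := min_prime_nil mP Pf.
  have [h [Hh Hn]] : exists h, Ann (f ^+ k) h /\ nilpotent (s ^+ k * (1 - h)).
    by apply: (HQ (f ^+ k)); rewrite /Ann -exprMn.
  exists (Some (k, s ^+ k, h)); split; first by split.
  by move/(prime_pow (proj1 mP)).
have [N [gi Hgi]] := HC U Uopen Ucov.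
pose kk j := if gi j is Some (k, _, _) then k else 0%N.
pose hh j := if gi j is Some (k, g, h) then (if `[< valid k g h >] then h else 0) else 0.
pose n := (\max_(j < N) kk j).+1.
have Hhh : forall j, (j < N)%N -> hh j * f ^+ n = 0.
  move=> j jN; rewrite /hh; case E: (gi j) => [[[k g] h]|]; last by rewrite mul0r.
  case: asboolP => [[Hk _]|_]; last by rewrite mul0r.
  have kn : (k <= n)%N.
    apply: leqW; have := @leq_bigmax _ (fun j : 'I_N => kk j) (Ordinal jN).
    by rewrite /= /kk E.
  by rewrite -(subnKC kn) exprD mulrA Hk mul0r.
pose Pi := \prod_(j < N) (1 - hh j).
pose H := 1 - Pi.
have HPi : forall P, minimal_prime P -> ~ P f \/ P Pi.
  move=> P mP; have [j [jN Uj]] := Hgi P mP.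
  move: Uj; rewrite /U; case E: (gi j) => [[[k g] h]|]; last by left.
  move=> [V nPg].
  right; have hj : hh j = h by rewrite /hh E; case: asboolP.
  have P1h : P (1 - h).
    by have /(primeM (proj1 mP)) [] := prime_nil (proj1 mP) (proj2 V).
  rewrite /Pi (bigD1 (Ordinal jN)) //= hj; apply: IidMr => //; exact: prime_ideal_ideal (proj1 mP).
have Hfn : H * f ^+ n = 0.
  have : Pi * f ^+ n = f ^+ n.
    rewrite /Pi; elim/big_rec: _ => [|i y _ IH]; first by rewrite mul1r.
    by rewrite -mulrA IH mulrBl mul1r Hhh // subr0.
  by rewrite /H mulrBl mul1r => ->; rewrite subrr.
have nil1 : nilpotent (H * Pi).
  apply: nil_of_min => P mP; have HP := proj1 mP; have IP := prime_ideal_ideal HP.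
  case: (HPi P mP) => [nPf|PPi]; last exact: IidM.
  apply: IidMr => //.
  have : P (H * f ^+ n) by rewrite Hfn; apply: Iid0.
  by move/(primeM HP) => [] // /(prime_pow HP).
have [m Hm] := nil1.
have [p [q Epq]] : exists p q, H ^+ m.+1 * p + Pi ^+ m.+1 * q = 1.
  apply: comax_sym; apply: comax_pow; apply: comax_sym; apply: comax_pow.
  by exists 1, 1; rewrite !mulr1 /H subrK.
pose u := H ^+ m.+1 * p; pose v := Pi ^+ m.+1 * q.
have uv : u * v = 0.
  rewrite /u /v; have -> : H ^+ m.+1 * p * (Pi ^+ m.+1 * q) = (H * Pi) ^+ m * (H * Pi) * (p * q).
    by rewrite exprMn !exprSr; ring.
  by rewrite Hm !mul0r.
have vE : v = 1 - u by rewrite -Epq -/u -/v addrC addKr.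
have vv : v * v = v by rewrite {1}vE mulrBl mul1r uv subr0.
exists n; split => //; exists v; split.
  rewrite vE mulrBl mul1r.
  have -> : u * f ^+ n = H ^+ m * p * (H * f ^+ n) by rewrite /u exprSr; ring.
  by rewrite Hfn mulr0 subr0.
move=> r Hr.
pose t := r * v.
have [h [Hh Hn']] : exists h, Ann t h /\ nilpotent (f ^+ n * (1 - h)).
  by apply: (HQ t); rewrite /Ann /t mulrA [f ^+ n * r]mulrC Hr mul0r.
pose w := v * (1 - h).
have nw : nilpotent w.
  apply: nil_of_min => P mP; have HP := proj1 mP; have IP := prime_ideal_ideal HP.
  have [Pv|nPv] := pselect (P v); first exact: IidMr.
  have nPPi : ~ P Pi.
    move=> PPi; apply: nPv; rewrite /v; apply: IidMr => //; rewrite exprS; exact: IidMr.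
  case: (HPi P mP) => // nPf.
  apply: IidM => //.
  by have /(primeM HP) [/(prime_pow HP)|] := prime_nil HP Hn'.
have wt : w * t = t.
  by rewrite /w -mulrA mulrBl mul1r Hh subr0 /t mulrCA vv.
exact: (nil_kill nw wt).
Qed.

End Main.

Section Fin.
Variable R : comPzRingType.
Implicit Types (P Q I J X : R -> Prop) (a b x y r s f : R).

Lemma min_unique (HQ : quasi_pf_ring R) P1 P2 X :
  minimal_prime P1 -> minimal_prime P2 -> ~ X 1 ->
  (forall a b, X a -> X b -> X (a + b)) ->
  (forall x, P1 x -> X x) -> (forall x, P2 x -> X x) -> forall x, P1 x -> P2 x.
Proof.
move=> m1 m2 nX1 XD s1 s2 x P1x; apply: contrapT => nP2x.
have [s [nPs [j Hj]]] := min_prime_nil m1 P1x.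
have [h [Hh Hn]] : exists h, Ann (x ^+ j) h /\ nilpotent (s ^+ j * (1 - h)).
  by apply: (HQ (x ^+ j)); rewrite /Ann -exprMn.
have P11h : P1 (1 - h).
  have /(primeM (proj1 m1)) [|//] := prime_nil (proj1 m1) Hn.
  by move/(prime_pow (proj1 m1)).
have P2h : P2 h.
  have : P2 (h * x ^+ j) by rewrite Hh; apply: Iid0; apply: prime_ideal_ideal (proj1 m2).
  by move/(primeM (proj1 m2)) => [//|/(prime_pow (proj1 m2))].
apply: nX1; rewrite -(subrK h 1); apply: XD; [exact: s1 | exact: s2].
Qed.

Lemma fin_cover : finitely_many_maximal R -> quasi_pf_ring R -> cover_compact R.
Proof.
move=> [n0 [F HF]] HQ U _ Ucov.
have key : forall mm, exists N (g : nat -> option (nat * R * R)),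
    forall P, minimal_prime P ->
    (exists M k, [/\ maximal_ideal M, (k < mm)%N, (forall x, P x -> M x) & forall x, M x <-> F k x]) ->
    exists j, (j < N)%N /\ U (g j) P.
  elim=> [|mm [N [g Hg]]].
    by exists 0%N, (fun _ => None) => P _ [M [k [_ //]]].
  have [[P0 [mP0 [M0 [maxM0 sub0 E0]]]]|no] := pselect (exists P0, minimal_prime P0 /\
      exists M0, [/\ maximal_ideal M0, (forall x, P0 x -> M0 x) & forall x, M0 x <-> F mm x]).
  - have [i0 Hi0] := Ucov P0 mP0.
    exists N.+1, (fun j => if (j < N)%N then g j else i0) => P mP [M [k [maxM km subP EM]]].
    rewrite ltnS leq_eqVlt in km; case/orP: km => [/eqP kE | klt].
    + subst k.
      have [[_ XD _] nM1 _] := maxM0.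
      have nX1 : ~ F mm 1 by move/E0.
      have XD' : forall a b, F mm a -> F mm b -> F mm (a + b).
        by move=> a b /E0 Ha /E0 Hb; apply/E0; apply: XD.
      have sP : forall x, P x -> F mm x by move=> x /subP /EM.
      have sP0 : forall x, P0 x -> F mm x by move=> x /sub0 /E0.
      have -> : P = P0.
        apply: funext => x; apply: propext; split.
        * exact: (min_unique HQ mP mP0 nX1 XD' sP sP0).
        * exact: (min_unique HQ mP0 mP nX1 XD' sP0 sP).
      by exists N; rewrite ltnSn ltnn.
    + have [j [jN Uj]] := Hg P mP (ex_intro _ M (ex_intro _ k (And4 maxM klt subP EM))).
      by exists j; rewrite jN; split => //; apply: ltnW.
  - exists N, g => P mP [M [k [maxM km subP EM]]].
    rewrite ltnS leq_eqVlt in km; case/orP: km => [/eqP kE | klt].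
    + by subst k; case: no; exists P; split => //; exists M.
    + exact: (Hg P mP (ex_intro _ M (ex_intro _ k (And4 maxM klt subP EM)))).
have [N [g Hg]] := key n0.
exists N, g => P mP.
have [M [maxM PM]] := max_exists (prime_ideal_ideal (proj1 mP)) (prime1 (proj1 mP)).
have [k [kn EK]] := HF M maxM.
by apply: Hg => //; exists M, k; split.
Qed.

End Fin.

Theorem corollary5p5 (R : comPzRingType) :
  finitely_many_maximal R \/ Min_quasi_compact R ->
  [/\ (GPP_ring R <-> GPF_ring R), (GPF_ring R <-> quasi_pf_ring R)
    & (GPP_ring R <-> quasi_pf_ring R)].
Proof.
move=> Hyp.
have A1 := @GPP_GPF R; have A2 := @GPF_QPF R.
have A3 : quasi_pf_ring R -> GPP_ring R /\ GPF_ring R.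
  move=> HQ; have HC : cover_compact R.
    case: Hyp => [Hf|Hm]; first exact: fin_cover.
    by move=> U Uo Uc; apply: Hm U Uo Uc.
  have S := main_split HQ HC.
  split => f; have [n [n1 Hn]] := S f; exists n; split => //.
    exact: split_proj.
  exact: split_flat.
split; split => H.
- exact: A1.
- exact: (A3 (A2 H)).1.
- exact: A2.
- exact: (A3 H).2.
- exact: A2 (A1 H).
- exact: (A3 H).1.
Qed.
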